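(* If a graph $G$ is $P_5$-free and has an efficient dominating set, then its square $G^2$ is $P_4$-free.
   Context: All graphs are finite, undirected and simple. A vertex dominates itself and all its neighbors. A vertex set $D$ of $G$ is an efficient dominating set if every vertex of $G$ is dominated by exactly one vertex of $D$. The square of $G=(V,E)$ is the graph $G^2=(V,E^2)$ in which $uv\in E^2$ if and only if the distance between $u$ and $v$ in $G$ is $1$ or $2$. $P_k$ denotes the chordless path on $k$ vertices; $F$-free means having no induced subgraph isomorphic to $F$. *)

(* Defs.v *)
From mathcomp Require Import all_boot.
Set Implicit Arguments. Unset Strict Implicit. Unset Printing Implicit Defensive.

Definition simple_graph (T : finType) (e : rel T) : Prop :=
  symmetric e /\ irreflexive e.

Definition dominates (T : finType) (e : rel T) (d v : T) : bool :=
  (d == v) || e d v.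

Definition efficient_dom (T : finType) (e : rel T) (D : {set T}) : Prop :=
  forall v : T, #|[set d in D | dominates e d v]| = 1.

Definition has_efficient_dom (T : finType) (e : rel T) : Prop :=
  exists D : {set T}, efficient_dom e D.

Definition sq_rel (T : finType) (e : rel T) : rel T :=
  fun x y => (x != y) && (e x y || [exists z, e x z && e z y]).

Definition induced_path (T : finType) (e : rel T) (k : nat) (f : 'I_k -> T) : Prop :=
  injective f /\
  forall i j : 'I_k, e (f i) (f j) = ((i.+1 == j :> nat) || (j.+1 == i :> nat)).

Definition Pk_free (T : finType) (e : rel T) (k : nat) : Prop :=
  forall f : 'I_k -> T, ~ induced_path e f.

(* Main.v *)
Require Import Defs.
From mathcomp Require Import all_boot.

Set Implicit Arguments. Unset Strict Implicit. Unset Printing Implicit Defensive.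

Definition pat (i k : nat) := (i.+1 == k) || (k.+1 == i).

Lemma pat_inj : [forall i : 'I_5, forall j : 'I_5,
  [forall k : 'I_5, pat i k == pat j k] ==> (i == j)].
Proof.
apply/forallP=> i; apply/forallP=> j; apply/implyP=> /forallP H.
move: (H ord0) (H (inord 1)) (H (inord 2)) (H (inord 3)) (H (inord 4)).
case: i j {H} => [[|[|[|[|[|i]]]]] Hi] [[|[|[|[|[|j]]]]] Hj] //;
rewrite /pat /= ?inordK //.
Qed.

Section Pf.
Variables (T : finType) (e : rel T).
Hypothesis esym : symmetric e.
Hypothesis irr : irreflexive e.
Hypothesis P5f : Pk_free e 5.

Lemma esymm x y : e x y -> e y x. Proof. by rewrite esym. Qed.

Lemma P5 v0 v1 v2 v3 v4 : e v0 v1 -> e v1 v2 -> e v2 v3 -> e v3 v4 ->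
  ~~ e v0 v2 -> ~~ e v0 v3 -> ~~ e v0 v4 -> ~~ e v1 v3 -> ~~ e v1 v4 ->
  ~~ e v2 v4 -> False.
Proof.
move=> h01 h12 h23 h34 n02 n03 n04 n13 n14 n24.
have h10 := esymm h01; have h21 := esymm h12; have h32 := esymm h23;
have h43 := esymm h34.
have n20 : e v2 v0 = false by rewrite esym; apply/negbTE.
have n30 : e v3 v0 = false by rewrite esym; apply/negbTE.
have n40 : e v4 v0 = false by rewrite esym; apply/negbTE.
have n31 : e v3 v1 = false by rewrite esym; apply/negbTE.
have n41 : e v4 v1 = false by rewrite esym; apply/negbTE.
have n42 : e v4 v2 = false by rewrite esym; apply/negbTE.
move/negbTE: n02 => n02; move/negbTE: n03 => n03; move/negbTE: n04 => n04.
move/negbTE: n13 => n13; move/negbTE: n14 => n14; move/negbTE: n24 => n24.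
pose f := fun i : 'I_5 => nth v0 [:: v0; v1; v2; v3; v4] i.
have Hrel : forall i j : 'I_5, e (f i) (f j) = pat i j.
  move=> [[|[|[|[|[|i]]]]] Hi] [[|[|[|[|[|j]]]]] Hj] //=;
  by rewrite ?irr ?h01 ?h12 ?h23 ?h34 ?h10 ?h21 ?h32 ?h43 ?n02 ?n03 ?n04
     ?n13 ?n14 ?n24 ?n20 ?n30 ?n40 ?n31 ?n41 ?n42.
apply: (P5f (f := f)); split => // i j Hij.
apply/eqP; move/forallP: pat_inj => /(_ i) /forallP /(_ j) /implyP; apply.
by apply/forallP => k; rewrite -!Hrel Hij.
Qed.


Definition far p q := (p != q) && ~~ e p q && ~~ [exists w, e p w && e w q].

Lemma far_sym p q : far p q -> far q p.
Proof.
rewrite /far eq_sym esym => /andP[/andP[-> ->]] /existsPn H /=.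
apply/existsPn => w; apply/negP => /andP[h1 h2]; move: (H w).
by rewrite esym h2 esym h1.
Qed.

Lemma far_ne p q : far p q -> ~~ e p q.
Proof. by case/andP=> /andP[]. Qed.

Lemma far_ne2 p q w : far p q -> e w q -> ~~ e p w.
Proof.
case/andP=> _ /existsPn /(_ w) H hw; apply/negP => h; move: H.
by rewrite h hw.
Qed.

Lemma far_ne3 p q w : far p q -> e p w -> ~~ e w q.
Proof. by move=> H hw; apply/negP => h; move: (far_ne2 H h); rewrite hw. Qed.

Lemma far_neq p q : far p q -> p != q.
Proof. by case/andP=> /andP[]. Qed.

Lemma far_sq p q : p != q -> sq_rel e p q = false -> far p q.
Proof. by rewrite /sq_rel /far => -> /= /negbT; rewrite negb_or => ->. Qed.

Lemma domfar w p q : dominates e w p -> e p q -> far w q -> False.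
Proof.
case/orP => [/eqP <-|h1] h2 F; first by move: (far_ne F); rewrite h2.
by move: (far_ne2 F h2); rewrite h1.
Qed.

Lemma domfar2 w p q : dominates e w p -> e w q -> far p q -> False.
Proof.
case/orP => [/eqP <-|h1] h2 F; first by move: (far_ne F); rewrite h2.
by move: (far_ne3 F (esymm h1)); rewrite h2.
Qed.

Lemma dom_near w p q : dominates e w p -> dominates e w q -> far p q -> False.
Proof.
move=> h1 h2 F; case/orP: h1 => [/eqP Ew|h1].
  subst w; case/orP: h2 => [/eqP Ep|h2]; first by move: (far_neq F); rewrite Ep eqxx.
  by move: (far_ne F); rewrite h2.
case/orP: h2 => [/eqP Eq|h2]; first by subst w; move: (far_ne F); rewrite esym h1.
by move: (far_ne2 F h2); rewrite esym h1.
Qed.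

Lemma dom_edge w p : dominates e w p -> w != p -> e w p.
Proof. by case/orP => [/eqP ->|//]; rewrite eqxx. Qed.

Variable D : {set T}.
Hypothesis ED : efficient_dom e D.

Lemma dom_ex v : exists2 w, w \in D & dominates e w v.
Proof.
have [w Hw] := cards1P (introT eqP (ED v)).
have : w \in [set d in D | dominates e d v] by rewrite Hw set11.
by rewrite inE => /andP[]; exists w.
Qed.

Lemma dom_uniq w1 w2 v : w1 \in D -> w2 \in D -> dominates e w1 v ->
  dominates e w2 v -> w1 = w2.
Proof.
move=> h1 h2 d1 d2; have [w Hw] := cards1P (introT eqP (ED v)).
have : w1 \in [set d in D | dominates e d v] by rewrite inE h1 d1.
have : w2 \in [set d in D | dominates e d v] by rewrite inE h2 d2.
by rewrite Hw !inE => /eqP -> /eqP ->.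
Qed.

Lemma dom_ne w1 w2 p : w1 \in D -> w2 \in D -> w1 != w2 -> dominates e w1 p ->
  ~~ e w2 p.
Proof.
move=> h1 h2 n d1; apply/negP => h; move/eqP: n; apply.
by apply: (dom_uniq h1 h2 d1); rewrite /dominates h orbT.
Qed.

Ltac nadj1 := match goal with
 | H : is_true (~~ e ?x ?y) |- is_true (~~ e ?x ?y) => exact H
 | H : is_true (far ?x ?y) |- is_true (~~ e ?x ?y) => exact (far_ne H)
 | H : is_true (far ?y ?x) |- is_true (~~ e ?x ?y) => exact (far_ne (far_sym H))
 | H : is_true (far ?x ?q), H2 : is_true (e ?y ?q) |- is_true (~~ e ?x ?y) => exact (far_ne2 H H2)
 | H : is_true (far ?q ?x), H2 : is_true (e ?y ?q) |- is_true (~~ e ?x ?y) => exact (far_ne2 (far_sym H) H2)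
 | H : is_true (far ?x ?q), H2 : is_true (e ?q ?y) |- is_true (~~ e ?x ?y) => exact (far_ne2 H (esymm H2))
 | H : is_true (far ?q ?x), H2 : is_true (e ?q ?y) |- is_true (~~ e ?x ?y) => exact (far_ne2 (far_sym H) (esymm H2))
 | H : is_true (far ?q ?y), H2 : is_true (e ?q ?x) |- is_true (~~ e ?x ?y) => exact (far_ne3 H H2)
 | H : is_true (far ?y ?q), H2 : is_true (e ?q ?x) |- is_true (~~ e ?x ?y) => exact (far_ne3 (far_sym H) H2)
 | H : is_true (far ?q ?y), H2 : is_true (e ?x ?q) |- is_true (~~ e ?x ?y) => exact (far_ne3 H (esymm H2))
 | H : is_true (far ?y ?q), H2 : is_true (e ?x ?q) |- is_true (~~ e ?x ?y) => exact (far_ne3 (far_sym H) (esymm H2))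
 end.
Ltac nadj := first [nadj1 | rewrite esym; nadj1].
Ltac edg := first [assumption | rewrite esym; assumption].
Ltac p5 := first [edg | nadj].

Lemma ndom w p : ~~ dominates e w p -> ~~ e w p.
Proof. by rewrite /dominates negb_or => /andP[]. Qed.

Lemma R a x z d u s : e a x -> e x z -> e z d -> far a d -> u \in D ->
  dominates e u x -> s \in D -> dominates e s a -> s = u \/ dominates e s z.
Proof.
move=> ax xz zd fad uD ux sD sa.
case: (boolP (dominates e s x)) => sx; first by left; apply: dom_uniq sD uD sx ux.
right; case: (boolP (dominates e s z)) => // sz; exfalso.
have nsx := ndom sx; have nsz := ndom sz.
have sa' : e s a.
  apply: dom_edge sa _; apply/eqP => Esa; subst s.
  by move: sx; rewrite /dominates ax orbT.
by apply: (P5 sa' ax xz zd); p5.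
Qed.

Lemma dself w : dominates e w w.
Proof. by rewrite /dominates eqxx. Qed.

Lemma core a b c d x z : e a x -> e x b -> e x z -> e z c -> e z d ->
  far a c -> far b d -> far a d -> (e b c || [exists y, e b y && e y c]) ->
  False.
Proof.
move=> ax xb xz zc zd fac fbd fad hbc.
have [u uD ux] := dom_ex x; have [v vD vz] := dom_ex z.
have repL : forall p, e p x -> far p d -> dominates e u p \/ dominates e v p.
  move=> p px fpd; have [s sD sp] := dom_ex p.
  have [Es|sz] := R px xz zd fpd uD ux sD sp; first by left; rewrite -Es.
  by right; rewrite -(dom_uniq sD vD sz vz).
have repR : forall p, e p z -> far p a -> dominates e u p \/ dominates e v p.
  move=> p pz fpa; have [s sD sp] := dom_ex p.
  have [Es|sx] := R pz (esymm xz) (esymm ax) fpa vD vz sD sp; first by right; rewrite -Es.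
  by left; rewrite -(dom_uniq sD uD sx ux).
have bx := esymm xb; have cz := esymm zc; have dz := esymm zd.
case: (boolP (dominates e u z)) => uz.
  have Evu := dom_uniq vD uD vz uz; subst v.
  have ua : dominates e u a by case: (repL a ax fad).
  have ud : dominates e u d by case: (repR d dz (far_sym fad)).
  exact: dom_near ua ud fad.
have uv : u != v by apply/eqP => Euv; move: uz; rewrite Euv vz.
have vu : v != u by rewrite eq_sym.
have nuz := ndom uz.
have uu := dself u; have vv := dself v.
have nuv : ~~ e u v := dom_ne vD uD vu vv.
case: (repL a ax fad) => [ua|va].
- have vd : dominates e v d.
    case: (repR d dz (far_sym fad)) => // ud; exfalso; exact: dom_near ua ud fad.
  have vc : dominates e v c.
    case: (repR c cz (far_sym fac)) => // uc; exfalso; exact: dom_near ua uc fac.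
  have ub : dominates e u b.
    case: (repL b bx fbd) => // vb; exfalso; exact: dom_near vb vd fbd.
  have nva := dom_ne uD vD uv ua; have nvb := dom_ne uD vD uv ub.
  have nuc := dom_ne vD uD vu vc; have nud := dom_ne vD uD vu vd.
  case: (boolP (e b c)) => bc.
    have ua' : e u a.
      apply: dom_edge ua _; apply/eqP => E; subst u; exact: domfar ub bc fac.
    have ub' : e u b.
      apply: dom_edge ub _; apply/eqP => E; subst u; exact: domfar2 ua bc fac.
    have vc' : e v c.
      apply: dom_edge vc _; apply/eqP => E; subst v; by move: nvb; rewrite esym bc.
    by apply: (P5 (esymm ua') ub' bc (esymm vc')); p5.
  move: hbc; rewrite (negbTE bc) /= => /existsP [y /andP [hby yc]].
  case: (boolP (e y u)) => yu.
    have uy : dominates e u y by rewrite /dominates esym yu orbT.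
    have nvy := dom_ne uD vD uv uy.
    have ua' : e u a.
      apply: dom_edge ua _; apply/eqP => E; subst u.
      by move: (far_ne2 fac yc); rewrite esym yu.
    have vc' : e v c.
      apply: dom_edge vc _; apply/eqP => E; subst v; by move: nvy; rewrite esym yc.
    by apply: (P5 (esymm ua') (esymm yu) yc (esymm vc')); p5.
  case: (boolP (e y v)) => yv.
    have ub' : e u b.
      apply: dom_edge ub _; apply/eqP => E; subst u; by move: yu; rewrite esym hby.
    have vd' : e v d.
      apply: dom_edge vd _; apply/eqP => E; subst v; by move: (far_ne2 fbd yv); rewrite hby.
    by apply: (P5 ub' hby yv vd'); p5.
  have ub' : e u b.
    apply: dom_edge ub _; apply/eqP => E; subst u; by move: yu; rewrite esym hby.
  have vc' : e v c.
    apply: dom_edge vc _; apply/eqP => E; subst v; by move: yv; rewrite yc.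
  by apply: (P5 ub' hby yc (esymm vc')); p5.
- have ud : dominates e u d.
    case: (repR d dz (far_sym fad)) => // vd; exfalso; exact: dom_near va vd fad.
  have uc : dominates e u c.
    case: (repR c cz (far_sym fac)) => // vc; exfalso; exact: dom_near va vc fac.
  have nua := dom_ne vD uD vu va; have nvc := dom_ne uD vD uv uc.
  have va' : e v a.
    apply: dom_edge va _; apply/eqP => E; subst v; exact: domfar vz zd fad.
  have vz' : e v z.
    apply: dom_edge vz _; apply/eqP => E; subst v; exact: domfar2 va zd fad.
  have uc' : e u c.
    apply: dom_edge uc _; apply/eqP => E; subst u; exact: domfar ux (esymm ax) (far_sym fac).
  by apply: (P5 (esymm va') vz' zc (esymm uc')); p5.
Qed.

Lemma sq_wit p q : sq_rel e p q -> ~~ e p q -> exists x, e p x && e x q.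
Proof. by case/andP=> _ /orP[->//|/existsP]. Qed.

Lemma main : Pk_free (sq_rel e) 4.
Proof.
move=> f [finj frel].
pose i0 : 'I_4 := @Ordinal 4 0 isT. pose i1 : 'I_4 := @Ordinal 4 1 isT.
pose i2 : 'I_4 := @Ordinal 4 2 isT. pose i3 : 'I_4 := @Ordinal 4 3 isT.
have sab : sq_rel e (f i0) (f i1) by rewrite frel.
have sbc : sq_rel e (f i1) (f i2) by rewrite frel.
have scd : sq_rel e (f i2) (f i3) by rewrite frel.
have fac : far (f i0) (f i2).
  apply: far_sq; last by rewrite frel.
  by apply/eqP => /finj /(congr1 val).
have fbd : far (f i1) (f i3).
  apply: far_sq; last by rewrite frel.
  by apply/eqP => /finj /(congr1 val).
have fad : far (f i0) (f i3).
  apply: far_sq; last by rewrite frel.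
  by apply/eqP => /finj /(congr1 val).
move: sab sbc scd fac fbd fad.
move: (f i0) (f i1) (f i2) (f i3) => a b c d sab sbc scd fac fbd fad.
case: (boolP (e a b)) => ab; case: (boolP (e b c)) => bc.
- by move: (far_ne2 fac bc); rewrite ab.
- have [y /andP [hby yc]] := sq_wit sbc bc.
  case: (boolP (e c d)) => cd.
    by apply: (P5 ab hby yc cd); p5.
  have [z /andP [cz zd]] := sq_wit scd cd.
  case: (boolP (e y z)) => yz.
    by apply: (P5 ab hby yz zd); p5.
  by apply: (P5 ab hby yc cz); p5.
- have [x /andP [ax xb]] := sq_wit sab ab.
  case: (boolP (e c d)) => cd.
    by move: (far_ne2 fbd cd); rewrite bc.
  have [z /andP [cz zd]] := sq_wit scd cd.
  case: (boolP (e x z)) => xz.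
    by apply: (core ax xb xz (esymm cz) zd fac fbd fad); rewrite bc.
  by apply: (P5 ax xb bc cz); p5.
- have [x /andP [ax xb]] := sq_wit sab ab.
  have [y /andP [hby yc]] := sq_wit sbc bc.
  case: (boolP (e c d)) => cd.
    case: (boolP (e x y)) => xy.
      by apply: (P5 ax xy yc cd); p5.
    by apply: (P5 xb hby yc cd); p5.
  have [z /andP [cz zd]] := sq_wit scd cd.
  case: (boolP (e x y)) => xy; last by apply: (P5 ax xb hby yc); p5.
  case: (boolP (e y z)) => yz; last by apply: (P5 hby yc cz zd); p5.
  case: (boolP (e x z)) => xz; last by apply: (P5 ax xy yz zd); p5.
  apply: (core ax xb xz (esymm cz) zd fac fbd fad).
  by apply/orP; right; apply/existsP; exists y; rewrite hby yc.
Qed.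

End Pf.

Theorem theorem3 (T : finType) (e : rel T) :
  simple_graph e -> Pk_free e 5 -> has_efficient_dom e -> Pk_free (sq_rel e) 4.
Proof.
move=> [esym irr] P5f [D ED]; exact: (main esym irr P5f ED).
Qed.
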